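(* Let $X$ be a connected graph of degree $d$, and let $G$ be a group acting transitively by graph automorphisms on the vertex set of $X$. Let $G'<G$ be a subgroup of finite index $m$, and let $X'$ be a $G'$-orbit of vertices. Then $X'$ is the vertex set of some $G'$-invariant graph of degree at most $d^{2m+1}$ such that the inclusion of $X'$ (with its graph metric) into $X$ (with its graph metric) is an $(O(m),O(m))$-quasi-isometry, the implied constants being universal.
   Context: A $(C,K)$-quasi-isometry $f:X\to Y$ between metric spaces satisfies $C^{-1}d(x,y)-K\le d(f(x),f(y))\le Cd(x,y)+K$ for all $x,y$, and every point of $Y$ is within distance $K$ of $f(X)$. *)

(* Defs.v *)
From Stdlib Require Import Reals Lra List.
Open Scope R_scope.

Definition simple_graph {V : Type} (E : V -> V -> Prop) : Prop :=
  (forall v w, E v w -> E w v) /\ (forall v, ~ E v v).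

Inductive walk {V : Type} (E : V -> V -> Prop) : nat -> V -> V -> Prop :=
| walk_nil : forall x, walk E 0 x x
| walk_cons : forall n x y z, E x y -> walk E n y z -> walk E (S n) x z.

Definition connected_graph {V : Type} (E : V -> V -> Prop) : Prop :=
  forall v w, exists n, walk E n v w.

Definition graph_dist {V : Type} (E : V -> V -> Prop) (x y : V) (k : nat) : Prop :=
  walk E k x y /\ forall j, walk E j x y -> (k <= j)%nat.

Definition regular_of_degree {V : Type} (E : V -> V -> Prop) (d : nat) : Prop :=
  forall v, exists l : list V, NoDup l /\ length l = d /\ (forall w, E v w <-> In w l).

Definition degree_at_most {V : Type} (P : V -> Prop) (E : V -> V -> Prop) (D : nat) : Prop :=
  forall v, P v -> exists l : list V, (length l <= D)%nat /\ (forall w, E v w -> In w l).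

Definition is_group {G : Type} (mul : G -> G -> G) (one : G) (inv : G -> G) : Prop :=
  (forall a b c, mul a (mul b c) = mul (mul a b) c) /\
  (forall a, mul one a = a) /\ (forall a, mul a one = a) /\
  (forall a, mul (inv a) a = one) /\ (forall a, mul a (inv a) = one).

Definition is_subgroup {G : Type} (mul : G -> G -> G) (one : G) (inv : G -> G)
  (H : G -> Prop) : Prop :=
  H one /\ (forall a b, H a -> H b -> H (mul a b)) /\ (forall a, H a -> H (inv a)).

(* H has index exactly m in G: there are exactly m left cosets r H,
   with representatives listed (without repetition of cosets) in reps *)
Definition has_index {G : Type} (mul : G -> G -> G) (one : G) (inv : G -> G)
  (H : G -> Prop) (m : nat) : Prop :=
  exists reps : list G, length reps = m /\
    (forall g, exists r, In r reps /\ H (mul (inv r) g)) /\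
    (forall i j, (i < m)%nat -> (j < m)%nat ->
       H (mul (inv (nth i reps one)) (nth j reps one)) -> i = j).

Definition action_by_automorphisms {G V : Type} (mul : G -> G -> G) (one : G)
  (act : G -> V -> V) (E : V -> V -> Prop) : Prop :=
  (forall v, act one v = v) /\
  (forall g h v, act (mul g h) v = act g (act h v)) /\
  (forall g v w, E v w <-> E (act g v) (act g w)).

Definition transitive_action {G V : Type} (act : G -> V -> V) : Prop :=
  forall v w, exists g, act g v = w.

Definition is_orbit {G V : Type} (act : G -> V -> V) (H : G -> Prop) (P : V -> Prop) : Prop :=
  exists x0, forall v, P v <-> exists h, H h /\ act h x0 = v.

Definition invariant_graph_on {G V : Type} (act : G -> V -> V) (H : G -> Prop)
  (P : V -> Prop) (E' : V -> V -> Prop) : Prop :=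
  simple_graph E' /\ (forall v w, E' v w -> P v /\ P w) /\
  (forall h v w, H h -> (E' v w <-> E' (act h v) (act h w))).

(* The inclusion of (P, graph metric of E') into (V, graph metric of E) is a
   (C,K)-quasi-isometry.  Both metrics are required to be finite (the first
   conjunct includes that P is connected in E'). *)
Definition qi_inclusion {V : Type} (P : V -> Prop) (E' E : V -> V -> Prop) (C K : R) : Prop :=
  (forall x y, P x -> P y -> exists k' k : nat,
      graph_dist E' x y k' /\ graph_dist E x y k /\
      / C * INR k' - K <= INR k /\ INR k <= C * INR k' + K) /\
  (forall v, exists x, P x /\ exists k : nat, walk E k x v /\ INR k <= K).

(* Main.v *)
Require Import Defs.
From Stdlib Require Import Reals List.
From Stdlib Require Import Lia Lra Classical Arith.
Open Scope R_scope.

Lemma walk_app {V} (E : V->V->Prop) : forall a x y, walk E a x y ->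
  forall b z, walk E b y z -> walk E (a+b) x z.
Proof. induction 1; intros; simpl; auto. econstructor; eauto. Qed.

Lemma walk_snoc {V} (E:V->V->Prop) n x y z : walk E n x y -> E y z -> walk E (S n) x z.
Proof.
  intros H1 H2. replace (S n) with (n+1)%nat by lia. eapply walk_app; eauto.
  econstructor; eauto. constructor.
Qed.

Lemma walk_unsnoc {V} (E:V->V->Prop) : forall n x z, walk E (S n) x z ->
  exists y, walk E n x y /\ E y z.
Proof.
  induction n; intros x z H; inversion H as [|n' x' y' z' Exy Hw]; subst.
  - inversion Hw; subst. exists x; split; [constructor|auto].
  - destruct (IHn _ _ Hw) as [w [Hw' Ew]]. exists w; split; auto. econstructor; eauto.
Qed.

Lemma walk_rev {V} (E:V->V->Prop) : (forall a b, E a b -> E b a) ->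
  forall n x y, walk E n x y -> walk E n y x.
Proof.
  intros Hs. induction 1. constructor. eapply walk_snoc; eauto.
Qed.

Lemma walk_map {V} (E:V->V->Prop) (f : V -> V) : (forall v w, E v w -> E (f v) (f w)) ->
  forall n x y, walk E n x y -> walk E n (f x) (f y).
Proof. intros Hf. induction 1. constructor. econstructor; eauto. Qed.

Lemma walk_pad {V} (E:V->V->Prop) : (forall a b, E a b -> E b a) ->
  forall t j v w u, walk E j v w -> E v u -> walk E (j + 2*t) v w.
Proof.
  intros Hs. induction t; intros j v w u Hw Hu.
  - rewrite Nat.add_0_r; auto.
  - replace (j + 2 * S t)%nat with (S (S (j + 2*t))) by lia.
    econstructor; [exact Hu|]. econstructor; [apply Hs; exact Hu|]. eauto.
Qed.

Lemma least (Q : nat -> Prop) : (exists n, Q n) -> exists n, Q n /\ forall j, Q j -> (n <= j)%nat.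
Proof.
  intros [n Hn]. induction n as [n IH] using lt_wf_ind.
  destruct (classic (exists j, (j < n)%nat /\ Q j)) as [[j [Hj Qj]]|N].
  - apply (IH j); auto.
  - exists n; split; auto. intros j Qj. destruct (le_lt_dec n j); auto.
    exfalso; apply N; eauto.
Qed.

Lemma one_reg {V} (E:V->V->Prop) : (forall a b, E a b -> E b a) -> regular_of_degree E 1 ->
  forall n x z, walk E n x z -> z = x \/ E x z.
Proof.
  intros Hs Hr. induction 1 as [|n x y z Exy Wyz IH].
  - left; auto.
  - destruct IH as [->|Eyz]. right; auto.
    left. destruct (Hr y) as [l [_ [Hl Hiff]]].
    apply Hiff in Eyz. assert (Hx : In x l) by (apply Hiff; apply Hs; auto).
    destruct l as [|a [|b l]]; simpl in *; try lia.
    destruct Eyz as [<-|[]]; destruct Hx as [<-|[]]; auto.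
Qed.

Theorem lemma2p4p1 :
  exists C : R, 0 < C /\
  forall (V : Type) (E : V -> V -> Prop) (d : nat)
    (G : Type) (mul : G -> G -> G) (one : G) (inv : G -> G) (act : G -> V -> V)
    (H : G -> Prop) (m : nat) (P : V -> Prop),
    simple_graph E -> connected_graph E -> regular_of_degree E d ->
    is_group mul one inv ->
    action_by_automorphisms mul one act E -> transitive_action act ->
    is_subgroup mul one inv H -> has_index mul one inv H m ->
    is_orbit act H P ->
    exists E' : V -> V -> Prop,
      invariant_graph_on act H P E' /\
      degree_at_most P E' (d ^ (2 * m + 1)) /\
      qi_inclusion P E' E (C * INR m) (C * INR m).
Proof.
  exists 3. split; [lra|].
  intros V E d G mul one inv act H m P HsE HcE HrE Hgrp Hact Htr Hsub Hidx Horb.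
  destruct Hgrp as [Gassoc [Gl1 [Gr1 [Glinv Grinv]]]].
  destruct Hact as [Aone [Amul Aaut]].
  destruct Hsub as [H1 [Hm Hi]].
  destruct Horb as [x0 Horb].
  destruct Hidx as [reps [Hlen [Hcov _]]].
  destruct HsE as [Esym Eirr].
  assert (Hm1 : (1 <= m)%nat).
  { destruct (Hcov one) as [r [Hr _]]. destruct reps; simpl in *; [contradiction|lia]. }
  assert (Acan : forall g v, act (inv g) (act g v) = v).
  { intros. rewrite <- Amul, Glinv, Aone; reflexivity. }
  assert (Pact : forall h v, H h -> P v -> P (act h v)).
  { intros h v Hh Pv. apply Horb in Pv as [h' [Hh' <-]]. apply Horb.
    exists (mul h h'). split; auto. }
  assert (Wact : forall g n v w, walk E n v w -> walk E n (act g v) (act g w)).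
  { intros. apply walk_map; auto. intros; apply Aaut; auto. }
  assert (Px0 : P x0) by (apply Horb; exists one; split; auto).
  set (DP := fun v k => (exists p, P p /\ walk E k p v) /\
                        forall p j, P p -> walk E j p v -> (k <= j)%nat).
  assert (DPex : forall v, exists k, DP v k).
  { intro v. destruct (HcE x0 v) as [n Hn].
    destruct (least (fun k => exists p, P p /\ walk E k p v)) as [k [Hk Hmin]]; eauto.
    exists k; split; auto. intros p j Pp Hw. apply Hmin; eauto. }
  assert (DPfun : forall v k1 k2, DP v k1 -> DP v k2 -> k1 = k2).
  { intros v k1 k2 [[p1 [P1 W1]] M1] [[p2 [P2 W2]] M2].
    specialize (M1 _ _ P2 W2). specialize (M2 _ _ P1 W1). lia. }
  assert (DPinv : forall h v k, H h -> DP v k -> DP (act h v) k).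
  { intros h v k Hh [[p [Pp Wp]] M]. split.
    - exists (act h p). split; auto.
    - intros p' j Pp' Wj. apply (M (act (inv h) p')). apply Pact; auto.
      apply Wact with (g := inv h) in Wj. rewrite Acan in Wj. exact Wj. }
  set (Lab := fun w r => In r reps /\ exists h, H h /\ act h (act (inv r) x0) = w).
  assert (Labex : forall w, exists r, Lab w r).
  { intro w. destruct (Htr x0 w) as [g Hg].
    destruct (Hcov (inv g)) as [r [Hr Hq]].
    exists r. split; auto. exists (inv (mul (inv r) (inv g))). split; auto.
    assert (E1 : act (inv r) x0 = act (mul (inv r) (inv g)) w).
    { rewrite <- Hg, <- Amul, <- Gassoc, Glinv, Gr1. reflexivity. }
    rewrite E1, Acan. reflexivity. }
  assert (Labsame : forall w1 w2 r k1 k2, Lab w1 r -> Lab w2 r -> DP w1 k1 -> DP w2 k2 -> k1 = k2).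
  { intros w1 w2 r k1 k2 [_ [h1 [Hh1 E1]]] [_ [h2 [Hh2 E2]]] D1 D2.
    apply (DPfun w2); auto.
    assert (w2 = act (mul h2 (inv h1)) w1) as ->.
    { rewrite <- E1, <- E2, Amul, Acan. reflexivity. }
    apply DPinv; auto. }
  assert (Count : forall k v, DP v k -> exists l, length l = S k /\ NoDup l /\ incl l reps /\
             forall r, In r l -> exists w j, (j <= k)%nat /\ DP w j /\ Lab w r).
  { induction k; intros v Dv.
    - destruct (Labex v) as [r Hr]. exists (r :: nil). split; [reflexivity|]. split.
      { constructor; [simpl; tauto| constructor]. }
      split.
      { intros x [<-|[]]. destruct Hr; auto. }
      intros r' [<-|[]]. exists v, 0%nat; auto.
    - pose proof Dv as Dv'.
      destruct Dv as [[p [Pp Wp]] M].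
      destruct (walk_unsnoc E _ _ _ Wp) as [u [Wu Eu]].
      assert (Du : DP u k).
      { split; eauto. intros p' j Pp' Wj.
        assert (S k <= S j)%nat by (apply (M p'); auto; eapply walk_snoc; eauto). lia. }
      destruct (IHk u Du) as [l [Hl [Hnd [Hinc Hlab]]]].
      destruct (Labex v) as [r Hr].
      exists (r :: l). split; [simpl; lia|]. split.
      { constructor; auto. intro Hin. destruct (Hlab r Hin) as [w [j [Hj [Dw Lw]]]].
        assert (j = S k) by (apply (Labsame w v r j (S k)); auto). lia. }
      split.
      { intros x [<-|Hx]; [destruct Hr; auto| auto]. }
      intros r' [<-|Hr'].
      + exists v, (S k). auto.
      + destruct (Hlab r' Hr') as [w [j [? [? ?]]]]. exists w, j; split; [lia|auto]. }
  assert (Dens : forall v, exists p j, P p /\ (j <= m - 1)%nat /\ walk E j p v).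
  { intro v. destruct (DPex v) as [k Dk]. destruct (Count k v Dk) as [l [Hl [Hnd [Hinc _]]]].
    pose proof (NoDup_incl_length Hnd Hinc). destruct Dk as [[p [Pp Wp]] _].
    exists p, k. repeat split; auto; lia. }
  set (E' := fun v w => P v /\ P w /\ v <> w /\ exists j, (j <= 2*m-1)%nat /\ walk E j v w).
  assert (E'f : forall g v w, H g -> E' v w -> E' (act g v) (act g w)).
  { intros g v w Hg [Pv [Pw [Hne [j [Hj Wj]]]]]. repeat split; auto.
    - intro Heq. apply Hne. apply (f_equal (act (inv g))) in Heq. rewrite !Acan in Heq. exact Heq.
    - exists j; auto. }
  exists E'. split; [|split].
  - split; [split|split].
    + intros v w [Pv [Pw [Hne [j [Hj Wj]]]]]. repeat split; auto.
      exists j; split; auto. apply walk_rev; auto.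
    + intros v [_ [_ [Hne _]]]; auto.
    + intros v w [Pv [Pw _]]; auto.
    + intros h v w Hh; split; [apply E'f; auto|]. intro Hx.
      apply (E'f (inv h)) in Hx; auto. rewrite !Acan in Hx. exact Hx.
  - intros v Pv.
    destruct (Nat.eq_dec d 1) as [Hd1|Hd1].
    + subst d. destruct (HrE v) as [l [_ [Hl Hiff]]]. exists l. split.
      { rewrite Nat.pow_1_l; lia. }
      intros w [_ [_ [Hne [j [_ Wj]]]]]. apply Hiff.
      destruct (one_reg E Esym HrE _ _ _ Wj) as [->|Hx]; [congruence|auto].
    + assert (Ends : forall n v, exists L, (length L <= d ^ n)%nat /\
                                           forall w, walk E n v w -> In w L).
      { induction n; intro v'.
        - exists (v' :: nil); simpl; split; [lia|]. intros w Hw; inversion Hw; subst; left; auto.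
        - destruct (HrE v') as [l [_ [Hl Hiff]]].
          assert (Aux : forall l', exists L, (length L <= length l' * d^n)%nat /\
                        forall y w, In y l' -> walk E n y w -> In w L).
          { induction l' as [|y l' IHl].
            - exists nil; simpl; split; [lia| tauto].
            - destruct IHl as [L [HL HinL]]. destruct (IHn y) as [L1 [HL1 HinL1]].
              exists (L1 ++ L). rewrite length_app; simpl; split; [lia| ].
              intros y' w [<-|Hy'] Hw; apply in_or_app; [left|right]; eauto. }
          destruct (Aux l) as [L [HL HinL]]. exists L. split.
          { simpl; rewrite Hl in HL; exact HL. }
          intros w Hw. inversion Hw as [|n' x' y w' Exy Wyw]; subst.
          apply (HinL y); auto. apply Hiff; auto. }
      destruct (Ends (2*m-1)%nat v) as [L1 [HL1 HIn1]].
      destruct (Ends (2*m)%nat v) as [L2 [HL2 HIn2]].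
      exists (L1 ++ L2). split.
      { rewrite length_app.
        replace (2*m)%nat with (S (2*m-1)) in HL2 by lia.
        replace (2*m+1)%nat with (S (S (2*m-1))) by lia.
        rewrite !Nat.pow_succ_r' in *. destruct (Nat.eq_dec d 0) as [->|Hd0].
        - rewrite Nat.pow_0_l in HL1 by lia. lia.
        - assert (2 <= d)%nat by lia. set (X := (d ^ (2*m-1))%nat) in *. nia. }
      intros w [_ [_ [Hne [j [Hj Wj]]]]].
      destruct j as [|j]; [inversion Wj; subst; congruence|].
      inversion Wj as [|n' x' u w' Evu Wuw]. 
      destruct (Nat.Even_or_Odd (2*m - S j)) as [[t Ht]|[t Ht]].
      * apply in_or_app; right. apply HIn2.
        replace (2*m)%nat with (S j + 2*t)%nat by lia. eapply walk_pad; eauto.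
      * apply in_or_app; left. apply HIn1.
        replace (2*m-1)%nat with (S j + 2*t)%nat by lia. eapply walk_pad; eauto.
  - assert (Lift : forall n a y, walk E n a y -> P y -> forall p, P p ->
               (exists j, (j <= m-1)%nat /\ walk E j p a) ->
               exists k', (k' <= S n)%nat /\ walk E' k' p y).
    { induction n; intros a y Wa Py p Pp [j [Hj Wj]].
      - inversion Wa; subst. destruct (classic (p = y)) as [<-|Hne].
        + exists 0%nat; split; [lia|constructor].
        + exists 1%nat. split; [lia|]. econstructor; [|constructor].
          repeat split; auto. exists j; split; [lia|auto].
      - inversion Wa as [|n' a' b y' Eab Wb]; subst.
        destruct (Dens b) as [p' [j' [Pp' [Hj' Wj']]]].
        destruct (IHn b y Wb Py p' Pp') as [k'' [Hk'' Wk'']].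
        { exists j'; split; auto. }
        destruct (classic (p = p')) as [<-|Hne].
        + exists k''; split; [lia|auto].
        + exists (S k''). split; [lia|]. econstructor; [|exact Wk''].
          repeat split; auto. exists (j + S j')%nat. split; [lia|].
          eapply walk_app; [exact Wj|]. econstructor; [exact Eab|].
          apply walk_rev; auto. }
    assert (Down : forall k' x y, walk E' k' x y ->
                   exists n, (n <= 2*m*k')%nat /\ walk E n x y).
    { induction 1 as [x|k' x y z Exy Wyz IH].
      - exists 0%nat; split; [lia|constructor].
      - destruct IH as [n [Hn Wn]]. destruct Exy as [_ [_ [_ [j [Hj Wj]]]]].
        exists (j + n)%nat. split; [nia|]. eapply walk_app; eauto. }
    split.
    + intros x y Px Py.
      destruct (least (fun k => walk E k x y)) as [k [Wk Mk]]; [apply HcE|].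
      destruct (Lift k x y Wk Py x Px) as [k1 [Hk1 Wk1]].
      { exists 0%nat; split; [lia|constructor]. }
      destruct (least (fun k => walk E' k x y)) as [k' [Wk' Mk']]; [eauto|].
      exists k', k. split; [split; auto|]. split; [split; auto|].
      assert (A1 : (k' <= S k)%nat) by (specialize (Mk' _ Wk1); lia).
      destruct (Down _ _ _ Wk') as [n [Hn Wn]].
      assert (A2 : (k <= 2*m*k')%nat) by (specialize (Mk _ Wn); lia).
      apply le_INR in A1. apply le_INR in A2.
      rewrite S_INR in A1. rewrite !mult_INR in A2. simpl in A2.
      assert (HM : 1 <= INR m) by (apply (le_INR 1); lia).
      assert (Ha : 0 <= INR k') by apply pos_INR.
      assert (Hb : 0 <= INR k) by apply pos_INR.
      assert (Hi0 : 0 < / (3 * INR m)) by (apply Rinv_0_lt_compat; lra).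
      assert (Hi1 : / (3 * INR m) <= 1).
      { rewrite <- Rinv_1. apply Rinv_le_contravar; lra. }
      split.
      * assert (/ (3 * INR m) * INR k' <= 1 * INR k') by (apply Rmult_le_compat_r; lra).
        nra.
      * replace (1+1) with 2 in A2 by lra. nra.
    + intro v. destruct (Dens v) as [p [j [Pp [Hj Wj]]]]. exists p; split; auto.
      exists j; split; auto. assert (INR j <= INR m) by (apply le_INR; lia).
      assert (0 <= INR m) by apply pos_INR. lra.
Qed.
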